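(* Let $U$ be a two-qubit unitary written as $$U=(u_A\otimes u_B)\exp\!\Big(i\sum_{k=1}^3 t_k\,\sigma_k\otimes\sigma_k\Big)(v_A^\dagger\otimes v_B^\dagger),$$ with $u_A,u_B,v_A,v_B$ single-qubit unitaries, $t_1,t_2,t_3\in\mathbb R$, and $\sigma_1,\sigma_2,\sigma_3$ the Pauli matrices. Then $U$ is a generalized thermal unitary if and only if there exist $j\neq k$ in $\{1,2,3\}$ with $(t_j-t_k)\bmod(\pi/2)=0$ or $(t_j+t_k)\bmod(\pi/2)=0$.
   Context: A unitary $U$ on $\mathcal H_A\otimes\mathcal H_B$ is a generalized thermal unitary if there exist Hermitian operators $H_A,H_A'$ on $\mathcal H_A$ and $H_B,H_B'$ on $\mathcal H_B$, with at least one of $H_A,H_B$ not proportional to the identity, such that $U(H_A\otimes\mathbb 1+\mathbb 1\otimes H_B)U^\dagger=H_A'\otimes\mathbb 1+\mathbb 1\otimes H_B'$. Here $\mathcal H_A=\mathcal H_B=\mathbb C^2$. *)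

(* Defs.v *)
From HB Require Import structures.
From mathcomp Require Import all_boot all_order all_algebra.
From mathcomp Require Import complex mxtens.
From mathcomp Require Import boolp classical_sets filter reals topology normedtype sequences trigo.
Set Implicit Arguments. Unset Strict Implicit. Unset Printing Implicit Defensive.
Import Order.TTheory GRing.Theory Num.Theory numFieldNormedType.Exports.
Local Open Scope ring_scope.
Local Open Scope complex_scope.

Section QDefs.
Variable R : realType.
Local Notation C := R[i].

Definition adj {m n : nat} (A : 'M[C]_(m, n)) : 'M[C]_(n, m) :=
  (map_mx (@conjc R) A)^T.

Definition unitary {n : nat} (U : 'M[C]_n) : Prop :=
  U *m adj U = 1%:M /\ adj U *m U = 1%:M.

Definition hermitian {n : nat} (H : 'M[C]_n) : Prop := adj H = H.

Definition mxpow {n : nat} (A : 'M[C]_n) (k : nat) : 'M[C]_n :=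
  iter k (mulmx A) 1%:M.

(* matrix exponential: exp A = sum_k A^k / k!, entrywise, as a limit of
   partial sums of real and imaginary parts (the series always converges) *)
Definition expm {n : nat} (A : 'M[C]_n) : 'M[C]_n :=
  \matrix_(i, j)
    Complex (limn (series (fun k => complex.Re (mxpow A k i j) / (k`!)%:R)))
            (limn (series (fun k => complex.Im (mxpow A k i j) / (k`!)%:R))).

Definition iC : C := Complex 0 1.

(* Pauli matrices sigma_1, sigma_2, sigma_3 (indices 0,1,2) *)
Definition pauli (k : 'I_3) : 'M[C]_2 :=
  \matrix_(a < 2, b < 2)
    match val k with
    | 0 => if a == b then 0 else 1
    | 1 => if a == b then 0 else if val a == 0 then - iC else iC
    | _ => if a == b then (if val a == 0 then 1 else -1) else 0
    end.

Definition canonical_unitary (uA uB vA vB : 'M[C]_2) (t : 'I_3 -> R)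
  : 'M[C]_(2 * 2) :=
  (uA *t uB) *m
  expm (iC *: \sum_(k < 3) ((t k)%:C *: (pauli k *t pauli k))) *m
  (adj vA *t adj vB).

Definition prop_to_id {n : nat} (H : 'M[C]_n) : Prop :=
  exists c : C, H = c%:M.

Definition gen_thermal (U : 'M[C]_(2 * 2)) : Prop :=
  exists HA HA' HB HB' : 'M[C]_2,
    [/\ hermitian HA /\ hermitian HA', hermitian HB /\ hermitian HB',
        (~ prop_to_id HA \/ ~ prop_to_id HB) &
        U *m (HA *t 1%:M + 1%:M *t HB) *m adj U
          = HA' *t 1%:M + 1%:M *t HB'].

Definition zero_mod_half_pi (x : R) : Prop :=
  exists m : int, x = m%:~R * (pi / 2).

End QDefs.

(* Main.v *)
Require Import Defs.
From HB Require Import structures.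
From mathcomp Require Import all_boot all_order all_algebra.
From mathcomp Require Import complex mxtens.
From mathcomp Require Import boolp classical_sets filter reals topology normedtype sequences trigo.
From mathcomp Require Import ring lra.
Set Implicit Arguments. Unset Strict Implicit. Unset Printing Implicit Defensive.
Import Order.TTheory GRing.Theory Num.Theory numFieldNormedType.Exports.
Local Open Scope classical_set_scope.
Local Open Scope ring_scope.
Local Open Scope complex_scope.

Ltac cases4 i := case: i => [[|[|[|[|?]]]] ?] //.
Ltac cases2 i := case: i => [[|[|?]] ?] //.
Ltac expand := rewrite !mxE; do 2 (rewrite ?big_ord_recr ?big_ord0 /= ?mxE /=).

Section S.
Variable R : realType.
Local Notation C := R[i].

Lemma lim_ser (c1 c2 : R) (f g : nat -> R) (lf lg : R) :
  series f @ \oo --> lf -> series g @ \oo --> lg ->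
  limn (series (fun k => c1 * f k + c2 * g k)) = c1 * lf + c2 * lg.
Proof.
move=> hf hg; apply: cvg_lim; first exact: Rhausdorff.
have -> : series (fun k => c1 * f k + c2 * g k) =
          (fun n => c1 * series f n + c2 * series g n).
  apply/funext => n; rewrite /series /= big_split /= -!mulr_sumr //.
apply: cvgD; [exact: cvgMl_tmp | exact: cvgMl_tmp].
Qed.

Lemma cvg_cos (x : R) : series (cos_coeff x) @ \oo --> cos x.
Proof. have := @is_cvg_series_cos_coeff R x. by rewrite unlock. Qed.
Lemma cvg_sin (x : R) : series (sin_coeff x) @ \oo --> sin x.
Proof. have := @is_cvg_series_sin_coeff R x. by rewrite unlock. Qed.

Lemma iC_sq : iC R ^+ 2 = -1.
Proof. by rewrite /iC sqr_i. Qed.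

Lemma iC_powE k : iC R ^+ k = (if odd k then iC R else 1) * ((-1) ^+ k./2)%:C.
Proof.
rewrite -{1}(odd_double_half k) exprD -mul2n exprM iC_sq rmorphXn rmorphN1.
by case: (odd k); rewrite ?expr1 ?expr0.
Qed.

Lemma Re_pow (x : R) k : complex.Re ((iC R * x%:C) ^+ k) / k`!%:R = cos_coeff x k.
Proof.
rewrite exprMn iC_powE -rmorphXn -mulrA -rmorphM /cos_coeff /=.
by case: (odd k) => /=; rewrite -exprnP; ring.
Qed.

Lemma half_pred_odd k : odd k -> k.-1./2 = k./2.
Proof.
move=> ok; rewrite -[in LHS](odd_double_half k) -[in RHS](odd_double_half k) ok.
by rewrite add1n /= uphalf_double doubleK.
Qed.

Lemma Im_pow (x : R) k : complex.Im ((iC R * x%:C) ^+ k) / k`!%:R = sin_coeff x k.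
Proof.
rewrite exprMn iC_powE -rmorphXn -mulrA -rmorphM /sin_coeff /=.
case/boolP: (odd k) => ok /=; last by ring.
by rewrite half_pred_odd //; ring.
Qed.

Lemma iiC : 'i%C * 'i%C = -1 :> C.
Proof. by rewrite -expr2 sqr_i. Qed.

Definition hC : C := (2%:R : C)^-1.

Lemma hCE : hC = (2^-1 : R)%:C.
Proof. by rewrite /hC fmorphV rmorph_nat. Qed.

Lemma two_neq0 : (2%:R : C) != 0.
Proof. by rewrite pnatr_eq0. Qed.

Definition E4f (P Q Rr S : C) (i j : nat) : C :=
  match i, j with
  | 0, 0 | 3, 3 => P + Q
  | 0, 3 | 3, 0 => P - Q
  | 1, 1 | 2, 2 => Rr + S
  | 1, 2 | 2, 1 => Rr - S
  | _, _ => 0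
  end.

Definition E4 P Q Rr S : 'M[C]_(2*2) := \matrix_(i, j) E4f P Q Rr S i j.


Lemma E4_mul a b c d P Q Rr S :
  E4 a b c d *m E4 P Q Rr S = 2%:R *: E4 (a * P) (b * Q) (c * Rr) (d * S).
Proof.
apply/matrixP => i j; rewrite !mxE !big_ord_recr big_ord0 /= !mxE.
cases4 i; cases4 j; rewrite /=; ring.
Qed.

Definition o0 : 'I_3 := @Ordinal 3 0 isT.
Definition o1 : 'I_3 := @Ordinal 3 1 isT.
Definition o2 : 'I_3 := @Ordinal 3 2 isT.

Lemma sum3 (V : zmodType) (F : 'I_3 -> V) : \sum_(k < 3) F k = F o0 + F o1 + F o2.
Proof.
rewrite !big_ord_recl big_ord0 addr0 addrA.
by congr (F _ + F _ + F _); apply: val_inj.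
Qed.

Definition thp (t : 'I_3 -> R) := t o2 + (t o0 - t o1).
Definition thq (t : 'I_3 -> R) := t o2 - (t o0 - t o1).
Definition thr (t : 'I_3 -> R) := t o0 + t o1 - t o2.
Definition ths (t : 'I_3 -> R) := - (t o0 + t o1) - t o2.

Lemma M_E4 (t : 'I_3 -> R) :
  iC R *: \sum_(k < 3) ((t k)%:C *: (pauli R k *t pauli R k)) =
  hC *: E4 (iC R * (thp t)%:C) (iC R * (thq t)%:C) (iC R * (thr t)%:C) (iC R * (ths t)%:C).
Proof.
rewrite sum3; apply/matrixP => i j; rewrite !mxE /thp /thq /thr /ths.
rewrite !(rmorphB, rmorphD, rmorphN) /hC.
have h2 := two_neq0.
cases4 i; cases4 j; rewrite /= /iC ?mulrNN ?mulNr ?mulrN ?iiC; field.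
all: by [].
Qed.

Lemma mxpow_E4 (a b c d : C) k :
  mxpow (hC *: E4 a b c d) k = hC *: E4 (a ^+ k) (b ^+ k) (c ^+ k) (d ^+ k).
Proof.
elim: k => [|k IH].
  rewrite /mxpow /=; apply/matrixP => i j; rewrite !mxE /hC.
  have h2 := two_neq0.
  cases4 i; cases4 j; rewrite /= ?expr0 ?subrr ?mulr0 //.
  1-4: by rewrite -[_ + _]/(2%:R : C) mulVf.
rewrite /mxpow iterS -/(mxpow _ k) IH -scalemxAl -scalemxAr E4_mul !scalerA.
congr (_ *: E4 _ _ _ _); rewrite ?exprS //.
by rewrite /hC -mulrA mulVf ?mulr1 // two_neq0.
Qed.

Definition expi (x : R) : C := Complex (cos x) (sin x).

Lemma Re_realM (c : R) (w : C) : complex.Re (c%:C * w) = c * complex.Re w.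
Proof. by case: w => a b /=; ring. Qed.
Lemma Im_realM (c : R) (w : C) : complex.Im (c%:C * w) = c * complex.Im w.
Proof. by case: w => a b /=; ring. Qed.

Lemma lim_entry (F : nat -> C) (c1 c2 a b : R) :
  (forall k, F k = c1%:C * (iC R * a%:C) ^+ k + c2%:C * (iC R * b%:C) ^+ k) ->
  Complex (limn (series (fun k => complex.Re (F k) / (k`!)%:R)))
          (limn (series (fun k => complex.Im (F k) / (k`!)%:R)))
  = c1%:C * expi a + c2%:C * expi b.
Proof.
move=> hF.
have -> : (fun k => complex.Re (F k) / (k`!)%:R) =
          (fun k => c1 * cos_coeff a k + c2 * cos_coeff b k).
  apply/funext => k; rewrite hF -!Re_pow raddfD /= !Re_realM; ring.
have -> : (fun k => complex.Im (F k) / (k`!)%:R) =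
          (fun k => c1 * sin_coeff a k + c2 * sin_coeff b k).
  apply/funext => k; rewrite hF -!Im_pow raddfD /= !Im_realM; ring.
rewrite (lim_ser _ _ (@cvg_cos a) (@cvg_cos b)) (lim_ser _ _ (@cvg_sin a) (@cvg_sin b)).
by apply/eqP; rewrite eq_complex /=; apply/andP; split; apply/eqP; ring.
Qed.

Lemma lim_entryP (F : nat -> C) (a b : R) :
  (forall k, F k = hC * ((iC R * a%:C) ^+ k + (iC R * b%:C) ^+ k)) ->
  Complex (limn (series (fun k => complex.Re (F k) / (k`!)%:R)))
          (limn (series (fun k => complex.Im (F k) / (k`!)%:R)))
  = hC * (expi a + expi b).
Proof.
move=> hF; rewrite (@lim_entry F (2^-1) (2^-1) a b) ?hCE ?mulrDr // => k.
by rewrite hF hCE mulrDr.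
Qed.

Lemma lim_entryM (F : nat -> C) (a b : R) :
  (forall k, F k = hC * ((iC R * a%:C) ^+ k - (iC R * b%:C) ^+ k)) ->
  Complex (limn (series (fun k => complex.Re (F k) / (k`!)%:R)))
          (limn (series (fun k => complex.Im (F k) / (k`!)%:R)))
  = hC * (expi a - expi b).
Proof.
move=> hF; rewrite (@lim_entry F (2^-1) (- 2^-1) a b) ?hCE ?rmorphN ?mulrBr ?mulNr //.
by move=> k; rewrite hF hCE mulrBr mulNr.
Qed.

Lemma lim_entry0 (F : nat -> C) :
  (forall k, F k = hC * 0) ->
  Complex (limn (series (fun k => complex.Re (F k) / (k`!)%:R)))
          (limn (series (fun k => complex.Im (F k) / (k`!)%:R)))
  = hC * 0.
Proof.
move=> hF; rewrite (@lim_entry F 0 0 0 0) ?mulr0 ?mul0r ?addr0 // => k.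
by rewrite hF !mulr0 !mul0r addr0.
Qed.

Lemma expm_E4 (a b c d : R) :
  expm (hC *: E4 (iC R * a%:C) (iC R * b%:C) (iC R * c%:C) (iC R * d%:C)) =
  hC *: E4 (expi a) (expi b) (expi c) (expi d).
Proof.
apply/matrixP => i j; rewrite /expm mxE [RHS]mxE.
cases4 i; cases4 j; rewrite /=.
all: rewrite mxE /=.
all: first [apply: lim_entryP | apply: lim_entryM | apply: lim_entry0].
all: by move=> k; rewrite mxpow_E4 mxE /= mxE.
Qed.

Lemma adj_mul m n p (A : 'M[C]_(m, n)) (B : 'M[C]_(n, p)) : adj (A *m B) = adj B *m adj A.
Proof. by rewrite /adj map_mxM trmx_mul. Qed.

Lemma adj_adj m n (A : 'M[C]_(m, n)) : adj (adj A) = A.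
Proof. by apply/matrixP => i j; rewrite !mxE conjcK. Qed.

Lemma adj_add m n (A B : 'M[C]_(m, n)) : adj (A + B) = adj A + adj B.
Proof. by apply/matrixP => i j; rewrite !mxE rmorphD. Qed.

Lemma adj_scale m n (c : C) (A : 'M[C]_(m, n)) : adj (c *: A) = c^* *: adj A.
Proof. by apply/matrixP => i j; rewrite !mxE rmorphM. Qed.

Lemma adj_one n : adj (1%:M : 'M[C]_n) = 1%:M.
Proof. by rewrite /adj map_scalar_mx tr_scalar_mx rmorph1. Qed.

Lemma adj_tens m n p q (A : 'M[C]_(m, n)) (B : 'M[C]_(p, q)) : adj (A *t B) = adj A *t adj B.
Proof. by apply/matrixP => i j; rewrite !mxE rmorphM. Qed.

Lemma conj_local (P Q X Y : 'M[C]_2) :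
  (P *t Q) *m (X *t 1%:M + 1%:M *t Y) *m adj (P *t Q) =
  (P *m X *m adj P) *t (Q *m adj Q) + (P *m adj P) *t (Q *m Y *m adj Q).
Proof.
by rewrite adj_tens mulmxDr mulmxDl !tensmx_mul !mulmx1.
Qed.

Lemma conj_local_u (P Q X Y : 'M[C]_2) : unitary P -> unitary Q ->
  (P *t Q) *m (X *t 1%:M + 1%:M *t Y) *m adj (P *t Q) =
  (P *m X *m adj P) *t 1%:M + 1%:M *t (Q *m Y *m adj Q).
Proof. by move=> [hP _] [hQ _]; rewrite conj_local hP hQ. Qed.

Lemma herm_conj (P H : 'M[C]_2) : Defs.hermitian H -> Defs.hermitian (P *m H *m adj P).
Proof. by rewrite /Defs.hermitian => hH; rewrite !adj_mul adj_adj hH mulmxA. Qed.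

Lemma nprop_conj (P H : 'M[C]_2) : unitary P -> ~ prop_to_id H -> ~ prop_to_id (P *m H *m adj P).
Proof.
move=> [h1 h2] nH [k hk]; apply: nH; exists k.
have -> : H = adj P *m (P *m H *m adj P) *m P by rewrite !mulmxA h2 mul1mx -mulmxA h2 mulmx1.
by rewrite hk mul_mx_scalar -scalemxAl h2 scalemx1.
Qed.

Lemma unitary_adj n (P : 'M[C]_n) : unitary P -> unitary (adj P).
Proof. by move=> [h1 h2]; split; rewrite adj_adj. Qed.

Lemma unconj (P H : 'M[C]_2) : unitary P -> adj P *m (P *m H *m adj P) *m P = H.
Proof. by case=> _ h; rewrite !mulmxA h mul1mx -mulmxA h mulmx1. Qed.

Lemma transfer (a b c d : 'M[C]_2) (V : 'M[C]_(2 * 2)) :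
  unitary a -> unitary b -> unitary c -> unitary d -> gen_thermal V ->
  gen_thermal ((a *t b) *m V *m (adj c *t adj d)).
Proof.
move=> ua ub uc ud [HA [HA' [HB [HB' [[hA hA'] [hB hB'] np eq]]]]].
exists (c *m HA *m adj c), (a *m HA' *m adj a), (d *m HB *m adj d), (b *m HB' *m adj b).
split.
- by split; apply: herm_conj.
- by split; apply: herm_conj.
- by case: np => h; [left|right]; apply: nprop_conj.
have e1 : (adj c *t adj d) *m ((c *m HA *m adj c) *t 1%:M + 1%:M *t (d *m HB *m adj d))
          *m adj (adj c *t adj d) = HA *t 1%:M + 1%:M *t HB.
  rewrite conj_local_u; [|exact: unitary_adj..]; rewrite !adj_adj.
  by rewrite !unconj.
rewrite !adj_mul.
set L := a *t b; set X := _ + _.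
have -> : L *m V *m (adj c *t adj d) *m X *m (adj (adj c *t adj d) *m (adj V *m adj L))
  = L *m (V *m ((adj c *t adj d) *m X *m adj (adj c *t adj d)) *m adj V) *m adj L.
  by rewrite !mulmxA.
by rewrite e1 eq /L conj_local_u.
Qed.

End S.

Section S3.
Variable R : realType.
Local Notation C := R[i].


Lemma tens11 : (1%:M : 'M[C]_2) *t (1%:M : 'M[C]_2) = 1%:M.
Proof. apply/matrixP => i j; cases4 i; cases4 j; by rewrite !mxE /= ?mulr1 ?mulr0. Qed.

Definition V0 (t : 'I_3 -> R) : 'M[C]_(2 * 2) :=
  hC R *: E4 (expi (thp t)) (expi (thq t)) (expi (thr t)) (expi (ths t)).

Lemma reduce (uA uB vA vB : 'M[C]_2) (t : 'I_3 -> R) :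
  unitary uA -> unitary uB -> unitary vA -> unitary vB ->
  gen_thermal (canonical_unitary uA uB vA vB t) <-> gen_thermal (V0 t).
Proof.
move=> ua ub uc ud.
have eU : canonical_unitary uA uB vA vB t = (uA *t uB) *m V0 t *m (adj vA *t adj vB).
  by rewrite /canonical_unitary M_E4 expm_E4.
rewrite eU; split => h; last by apply: transfer.
have := transfer (unitary_adj ua) (unitary_adj ub) (unitary_adj uc) (unitary_adj ud) h.
rewrite !adj_adj !mulmxA tensmx_mul.
case: ua => _ ->; case: ub => _ ->; rewrite tens11 mul1mx -mulmxA tensmx_mul.
by case: uc => _ ->; case: ud => _ ->; rewrite tens11 mulmx1.
Qed.

Definition Yf (a00 a01 a10 a11 b00 b01 b10 b11 : C) (i j : nat) : C :=
  match i, j with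
  | 0, 0 => a00 + b00 | 0, 1 => b01 | 0, 2 => a01 | 0, 3 => 0
  | 1, 0 => b10 | 1, 1 => a00 + b11 | 1, 2 => 0 | 1, 3 => a01
  | 2, 0 => a10 | 2, 1 => 0 | 2, 2 => a11 + b00 | 2, 3 => b01
  | 3, 0 => 0 | 3, 1 => a10 | 3, 2 => b10 | _, _ => a11 + b11
  end.

Definition Ymx a00 a01 a10 a11 b00 b01 b10 b11 : 'M[C]_(2 * 2) :=
  \matrix_(i, j) Yf a00 a01 a10 a11 b00 b01 b10 b11 i j.

Lemma ord2_0 (p : (0 < 2)%N) : @Ordinal 2 0 p = ord0.
Proof. exact: val_inj. Qed.
Lemma ord2_1 (p : (1 < 2)%N) : @Ordinal 2 1 p = ord_max.
Proof. exact: val_inj. Qed.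

Lemma Y_expand (A B : 'M[C]_2) : A *t 1%:M + 1%:M *t B =
  Ymx (A ord0 ord0) (A ord0 ord_max) (A ord_max ord0) (A ord_max ord_max)
      (B ord0 ord0) (B ord0 ord_max) (B ord_max ord0) (B ord_max ord_max).
Proof.
apply/matrixP => i j; rewrite !mxE.
cases4 i; cases4 j; rewrite /= ?ord2_0 ?ord2_1 ?mulr1 ?mul1r ?mulr0 ?mul0r ?addr0 ?add0r //.
Qed.

Definition i0 : 'I_(2 * 2) := @Ordinal (2 * 2) 0 isT.
Definition i1 : 'I_(2 * 2) := @Ordinal (2 * 2) 1 isT.
Definition i2 : 'I_(2 * 2) := @Ordinal (2 * 2) 2 isT.
Definition i3 : 'I_(2 * 2) := @Ordinal (2 * 2) 3 isT.


Lemma mul4_eq0 (x : C) : x * 4%:R = 0 -> x = 0.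
Proof. by move/eqP; rewrite mulf_eq0 pnatr_eq0 orbF => /eqP. Qed.

Definition Xp p q r s a00 a01 a10 a11 b00 b01 b10 b11 :=
  E4 p q r s *m Ymx a00 a01 a10 a11 b00 b01 b10 b11 *m E4 (p^-1) (q^-1) (r^-1) (s^-1).

Lemma fwd_alg p q r s a00 a01 a10 a11 b00 b01 b10 b11 :
  p != 0 -> q != 0 -> r != 0 -> s != 0 ->
  let X := Xp p q r s a00 a01 a10 a11 b00 b01 b10 b11 in
  X i0 i3 = 0 -> X i1 i2 = 0 -> X i0 i1 = X i2 i3 -> X i0 i2 = X i1 i3 ->
  X i1 i0 = X i3 i2 -> X i2 i0 = X i3 i1 ->
  [/\ (a00 - a11 + b00 - b11) * (q / p - p / q) = 0,
      (a00 - a11 - b00 + b11) * (s / r - r / s) = 0 &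
      (a01 + a10 + b01 + b10) * (p / r - r / p) = 0] /\
  [/\ (a01 + a10 - b01 - b10) * (q / s - s / q) = 0,
      (a01 - a10 - b01 + b10) * (p / s - s / p) = 0 &
      (a01 - a10 + b01 - b10) * (q / r - r / q) = 0].
Proof.
move=> hp hq hr hs X e03 e12 e01 e02 e10 e20.
have k3a : (a00 - a11 + b00 - b11) * (q / p - p / q) = X i0 i3.
  by rewrite /X /Xp; expand; field; rewrite ?hp ?hq ?hr ?hs.
have k3b : (a00 - a11 - b00 + b11) * (s / r - r / s) = X i1 i2.
  by rewrite /X /Xp; expand; field; rewrite ?hp ?hq ?hr ?hs.
have k1a : (a01 + a10 + b01 + b10) * (p / r - r / p) * 4%:R =
  (X i0 i1 - X i2 i3) + (X i0 i2 - X i1 i3) - (X i1 i0 - X i3 i2) - (X i2 i0 - X i3 i1).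
  by rewrite /X /Xp; expand; field; rewrite ?hp ?hq ?hr ?hs.
have k1b : (a01 + a10 - b01 - b10) * (q / s - s / q) * 4%:R =
  - (X i0 i1 - X i2 i3) + (X i0 i2 - X i1 i3) + (X i1 i0 - X i3 i2) - (X i2 i0 - X i3 i1).
  by rewrite /X /Xp; expand; field; rewrite ?hp ?hq ?hr ?hs.
have k2a : (a01 - a10 - b01 + b10) * (p / s - s / p) * 4%:R =
  - (X i0 i1 - X i2 i3) + (X i0 i2 - X i1 i3) - (X i1 i0 - X i3 i2) + (X i2 i0 - X i3 i1).
  by rewrite /X /Xp; expand; field; rewrite ?hp ?hq ?hr ?hs.
have k2b : (a01 - a10 + b01 - b10) * (q / r - r / q) * 4%:R =
  (X i0 i1 - X i2 i3) + (X i0 i2 - X i1 i3) + (X i1 i0 - X i3 i2) + (X i2 i0 - X i3 i1).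
  by rewrite /X /Xp; expand; field; rewrite ?hp ?hq ?hr ?hs.
rewrite e01 e02 e10 e20 !subrr ?addr0 ?subr0 ?oppr0 in k1a k1b k2a k2b.
split; split; [by rewrite k3a | by rewrite k3b | exact: mul4_eq0 ..].
Qed.

End S3.

Section S4.
Variable R : realType.
Local Notation C := R[i].

Lemma expi_add (x y : R) : expi (x + y) = expi x * expi y.
Proof. by apply/eqP; rewrite eq_complex /= cosD sinD; apply/andP; split; apply/eqP; ring. Qed.

Lemma expi0 : expi 0 = 1 :> C.
Proof. by rewrite /expi cos0 sin0. Qed.

Lemma expi_neq0 (x : R) : expi x != 0.
Proof.
apply/negP => /eqP h; have := cos2Dsin2 x.
by move: h => /eqP; rewrite eq_complex /= => /andP [/eqP -> /eqP ->]; rewrite expr0n /= addr0 => /eqP; rewrite eq_sym oner_eq0.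
Qed.

Lemma expi_neg (x : R) : expi (- x) = (expi x)^-1.
Proof.
apply: (mulfI (expi_neq0 x)); rewrite -expi_add subrr expi0 mulfV //; exact: expi_neq0.
Qed.

Lemma conj_expi (x : R) : (expi x)^* = (expi x)^-1.
Proof. by rewrite -expi_neg /expi /= cosN sinN. Qed.

Lemma sin_natpi (n : nat) : sin (n%:R * pi) = 0 :> R.
Proof.
elim: n => [|n IH]; first by rewrite mul0r sin0.
by rewrite -addn1 natrD mulrDl mul1r sinDpi IH oppr0.
Qed.

Lemma sin_intpi (m : int) : sin (m%:~R * pi) = 0 :> R.
Proof.
case: m => n; first by rewrite sin_natpi.
by rewrite NegzE mulrNz mulNr sinN sin_natpi oppr0.
Qed.

Lemma sin_addnatpi (y : R) (n : nat) : sin (y + n%:R * pi) = (-1) ^+ n * sin y.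
Proof.
elim: n => [|n IH]; first by rewrite mul0r addr0 expr0 mul1r.
by rewrite -addn1 natrD mulrDl mul1r addrA sinDpi IH exprD expr1; ring.
Qed.

Lemma sin_addintpi0 (y : R) (m : int) : sin (y + m%:~R * pi) = 0 -> sin y = 0.
Proof.
case: m => n.
  rewrite sin_addnatpi => /eqP; rewrite mulf_eq0 signr_eq0 /= => /eqP //.
rewrite NegzE mulrNz mulNr => h.
have := sin_addnatpi (y - n.+1%:R * pi) n.+1.
by rewrite subrK h mulr0.
Qed.

Lemma sin_eq0 (x : R) : sin x = 0 <-> exists m : int, x = m%:~R * pi.
Proof.
split; last by case=> m ->; exact: sin_intpi.
move=> h.
set m := Num.floor (x / pi).
have pi0 := pi_gt0 R.
have h1 : m%:~R * pi <= x.
  by rewrite -ler_pdivlMr // floor_le.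
have h2 : x < m%:~R * pi + pi.
  by rewrite -[X in _ + X]mul1r -mulrDl -ltr_pdivrMr // -[1]/(1%:~R) -intrD floorD1_gt.
exists m.
have hs : sin (x - m%:~R * pi) = 0.
  apply: (@sin_addintpi0 _ m); by rewrite subrK.
have : ~ (0 < x - m%:~R * pi < pi).
  by move=> /sin_gt0_pi; rewrite hs ltxx.
move=> hn; apply/eqP; rewrite -subr_eq0; apply/eqP.
apply/eqP; apply: contra_notT hn => hne.
apply/andP; split; last by lra.
rewrite lt_def hne /=; lra.
Qed.

Lemma expi_div (a b : R) : expi a / expi b = expi (a - b).
Proof. by rewrite expi_add expi_neg. Qed.

Lemma phase_fwd (a b : R) : expi a / expi b - expi b / expi a = 0 -> sin (a - b) = 0.
Proof.
rewrite !expi_div (_ : b - a = - (a - b)); last by rewrite opprB.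
rewrite /expi cosN sinN => /eqP; rewrite eq_complex /= => /andP [_ /eqP h].
have : sin (a - b) * 2%:R = 0 by rewrite -h; ring.
by move/eqP; rewrite mulf_eq0 pnatr_eq0 orbF => /eqP.
Qed.

Lemma phase_bwd (a b : R) : sin (a - b) = 0 -> expi b = expi a \/ expi b = - expi a.
Proof.
move=> h.
have hb : expi b = expi a * (cos (a - b))%:C.
  have e : b = a + (b - a) by rewrite addrC subrK.
  rewrite {1}e expi_add; congr (_ * _).
  rewrite (_ : b - a = - (a - b)); last by rewrite opprB.
  by rewrite /expi cosN sinN h oppr0.
have : cos (a - b) ^+ 2 = 1 by rewrite cos2sin2 h expr0n /= subr0.
move/eqP; rewrite sqrf_eq1 => /orP [] /eqP hc; rewrite hb hc.
  by left; rewrite mulr1.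
by right; rewrite rmorphN1 mulrN1.
Qed.

Lemma zmhp_sin (u : R) : zero_mod_half_pi u <-> sin (2%:R * u) = 0.
Proof.
rewrite sin_eq0; split => -[m hm]; exists m.
  by rewrite hm; field.
have -> : u = (2%:R * u) / 2%:R by field.
by rewrite hm; field.
Qed.

End S4.

Section S5.
Variable R : realType.
Local Notation C := R[i].


Lemma bwd_core (p q r s a00 a01 a10 a11 b00 b01 b10 b11 : C) :
  p != 0 -> q != 0 -> r != 0 -> s != 0 ->
  (a00 - a11 + b00 - b11) * (q / p - p / q) = 0 ->
  (a00 - a11 - b00 + b11) * (s / r - r / s) = 0 ->
  (a01 + a10 + b01 + b10) * (p / r - r / p) = 0 ->
  (a01 + a10 - b01 - b10) * (q / s - s / q) = 0 ->
  (a01 - a10 - b01 + b10) * (p / s - s / p) = 0 ->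
  (a01 - a10 + b01 - b10) * (q / r - r / q) = 0 ->
  let X := Xp p q r s a00 a01 a10 a11 b00 b01 b10 b11 in
  [/\ X i0 i3 = 0, X i1 i2 = 0, X i2 i1 = 0 & X i3 i0 = 0] /\
  [/\ X i0 i1 = X i2 i3, X i0 i2 = X i1 i3, X i1 i0 = X i3 i2, X i2 i0 = X i3 i1 &
      X i0 i0 - X i1 i1 = X i2 i2 - X i3 i3].
Proof.
move=> hp hq hr hs h3a h3b h1a h1b h2a h2b X.
split; split.
- by rewrite -h3a /X /Xp; expand; field; rewrite ?hp ?hq ?hr ?hs.
- by rewrite -h3b /X /Xp; expand; field; rewrite ?hp ?hq ?hr ?hs.
- by rewrite -oppr0 -h3b /X /Xp; expand; field; rewrite ?hp ?hq ?hr ?hs.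
- by rewrite -oppr0 -h3a /X /Xp; expand; field; rewrite ?hp ?hq ?hr ?hs.
- apply/eqP; rewrite -subr_eq0; apply/eqP.
  have -> : 0 = (a01 + a10 + b01 + b10) * (p / r - r / p) - (a01 + a10 - b01 - b10) * (q / s - s / q)
     - (a01 - a10 - b01 + b10) * (p / s - s / p) + (a01 - a10 + b01 - b10) * (q / r - r / q) :> C
    by rewrite h1a h1b h2a h2b; ring.
  by rewrite /X /Xp; expand; field; rewrite ?hp ?hq ?hr ?hs.
- apply/eqP; rewrite -subr_eq0; apply/eqP.
  have -> : 0 = (a01 + a10 + b01 + b10) * (p / r - r / p) + (a01 + a10 - b01 - b10) * (q / s - s / q)
     + (a01 - a10 - b01 + b10) * (p / s - s / p) + (a01 - a10 + b01 - b10) * (q / r - r / q) :> C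
    by rewrite h1a h1b h2a h2b; ring.
  by rewrite /X /Xp; expand; field; rewrite ?hp ?hq ?hr ?hs.
- apply/eqP; rewrite -subr_eq0; apply/eqP.
  have -> : 0 = - (a01 + a10 + b01 + b10) * (p / r - r / p) + (a01 + a10 - b01 - b10) * (q / s - s / q)
     - (a01 - a10 - b01 + b10) * (p / s - s / p) + (a01 - a10 + b01 - b10) * (q / r - r / q) :> C
    by rewrite mulNr h1a h1b h2a h2b; ring.
  by rewrite /X /Xp; expand; field; rewrite ?hp ?hq ?hr ?hs.
- apply/eqP; rewrite -subr_eq0; apply/eqP.
  have -> : 0 = - (a01 + a10 + b01 + b10) * (p / r - r / p) - (a01 + a10 - b01 - b10) * (q / s - s / q)
     + (a01 - a10 - b01 + b10) * (p / s - s / p) + (a01 - a10 + b01 - b10) * (q / r - r / q) :> C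
    by rewrite mulNr h1a h1b h2a h2b; ring.
  by rewrite /X /Xp; expand; field; rewrite ?hp ?hq ?hr ?hs.
- by rewrite /X /Xp; expand; field; rewrite ?hp ?hq ?hr ?hs.
Qed.

End S5.

Section S6.
Variable R : realType.
Local Notation C := R[i].


Lemma ord4_0 (p : (0 < 2 * 2)%N) : @Ordinal (2 * 2) 0 p = i0. Proof. exact: val_inj. Qed.
Lemma ord4_1 (p : (1 < 2 * 2)%N) : @Ordinal (2 * 2) 1 p = i1. Proof. exact: val_inj. Qed.
Lemma ord4_2 (p : (2 < 2 * 2)%N) : @Ordinal (2 * 2) 2 p = i2. Proof. exact: val_inj. Qed.
Lemma ord4_3 (p : (3 < 2 * 2)%N) : @Ordinal (2 * 2) 3 p = i3. Proof. exact: val_inj. Qed.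

Lemma local_entries (X : 'M[C]_(2 * 2)) (c : C) (A B : 'M[C]_2) :
  c != 0 -> c *: X = A *t 1%:M + 1%:M *t B ->
  [/\ X i0 i3 = 0, X i1 i2 = 0 & X i0 i1 = X i2 i3] /\
  [/\ X i0 i2 = X i1 i3, X i1 i0 = X i3 i2 & X i2 i0 = X i3 i1].
Proof.
move=> hc; rewrite Y_expand => e.
have E : forall i j, X i j = c^-1 * Ymx (A ord0 ord0) (A ord0 ord_max) (A ord_max ord0) (A ord_max ord_max)
      (B ord0 ord0) (B ord0 ord_max) (B ord_max ord0) (B ord_max ord_max) i j.
  by move=> i j; rewrite -e mxE mulKf.
by split; split; rewrite !E !mxE /= ?mulr0.
Qed.

Lemma six_zero (a00 a01 a10 a11 b00 b01 b10 b11 : C) :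
  a00 - a11 + b00 - b11 = 0 -> a00 - a11 - b00 + b11 = 0 ->
  a01 + a10 + b01 + b10 = 0 -> a01 + a10 - b01 - b10 = 0 ->
  a01 - a10 - b01 + b10 = 0 -> a01 - a10 + b01 - b10 = 0 ->
  [/\ a01 = 0, a10 = 0, b01 = 0 & b10 = 0] /\ (a00 = a11 /\ b00 = b11).
Proof.
move=> h1 h2 h3 h4 h5 h6.
have m2 : forall x : C, x * 2%:R = 0 -> x = 0.
  by move=> x /eqP; rewrite mulf_eq0 pnatr_eq0 orbF => /eqP.
split; first split; [apply: mul4_eq0 ..|].
- have e : a01 * 4%:R = (a01 + a10 + b01 + b10) + (a01 + a10 - b01 - b10) + (a01 - a10 - b01 + b10) + (a01 - a10 + b01 - b10) by ring.
  by rewrite e ?h3 ?h4 ?h5 ?h6 ?addr0.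
- have e : a10 * 4%:R = (a01 + a10 + b01 + b10) + (a01 + a10 - b01 - b10) - (a01 - a10 - b01 + b10) - (a01 - a10 + b01 - b10) by ring.
  by rewrite e ?h3 ?h4 ?h5 ?h6 ?subr0 ?addr0.
- have e : b01 * 4%:R = (a01 + a10 + b01 + b10) - (a01 + a10 - b01 - b10) - (a01 - a10 - b01 + b10) + (a01 - a10 + b01 - b10) by ring.
  by rewrite e ?h3 ?h4 ?h5 ?h6 ?subr0 ?addr0.
- have e : b10 * 4%:R = (a01 + a10 + b01 + b10) - (a01 + a10 - b01 - b10) + (a01 - a10 - b01 + b10) - (a01 - a10 + b01 - b10) by ring.
  by rewrite e ?h3 ?h4 ?h5 ?h6 ?subr0 ?addr0.
split; apply/eqP; rewrite -subr_eq0; apply/eqP; apply: m2.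
- have e : (a00 - a11) * 2%:R = (a00 - a11 + b00 - b11) + (a00 - a11 - b00 + b11) by ring.
  by rewrite e ?h1 ?h2 ?addr0.
- have e : (b00 - b11) * 2%:R = (a00 - a11 + b00 - b11) - (a00 - a11 - b00 + b11) by ring.
  by rewrite e ?h1 ?h2 ?subr0.
Qed.

Lemma herm_entries n (X : 'M[C]_n) : Defs.hermitian X -> forall i j, (X j i)^* = X i j.
Proof. by move=> hX i j; rewrite -{2}hX mxE mxE. Qed.

Lemma mi00 : mxtens_index (ord0 : 'I_2, ord0 : 'I_2) = i0. Proof. exact: val_inj. Qed.
Lemma mi01 : mxtens_index (ord0 : 'I_2, ord_max : 'I_2) = i1. Proof. exact: val_inj. Qed.
Lemma mi10 : mxtens_index (ord_max : 'I_2, ord0 : 'I_2) = i2. Proof. exact: val_inj. Qed.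
Lemma mi11 : mxtens_index (ord_max : 'I_2, ord_max : 'I_2) = i3. Proof. exact: val_inj. Qed.

Lemma local_of_conditions (X : 'M[C]_(2 * 2)) : Defs.hermitian X ->
  [/\ X i0 i3 = 0, X i1 i2 = 0, X i2 i1 = 0 & X i3 i0 = 0] /\
  [/\ X i0 i1 = X i2 i3, X i0 i2 = X i1 i3, X i1 i0 = X i3 i2, X i2 i0 = X i3 i1 &
      X i0 i0 - X i1 i1 = X i2 i2 - X i3 i3] ->
  exists HA' HB' : 'M[C]_2, [/\ Defs.hermitian HA', Defs.hermitian HB' &
     X = HA' *t 1%:M + 1%:M *t HB'].
Proof.
move=> hX [[c03 c12 c21 c30] [c01 c02 c10 c20 cd]].
have hx := herm_entries hX.
exists (\matrix_(i, j) X (mxtens_index (i, ord0)) (mxtens_index (j, ord0))).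
exists (\matrix_(i, j) (X (mxtens_index (ord0, i)) (mxtens_index (ord0, j)) - (i == j)%:R * X i0 i0)).
split.
- by apply/matrixP => i j; rewrite !mxE hx.
- apply/matrixP => i j; by rewrite !mxE rmorphB rmorphM /= !hx conjc_nat eq_sym.
apply/matrixP => i j.
case: (mxtens_indexP i) => iA iB; case: (mxtens_indexP j) => jA jB.
rewrite !mxE !mxtens_indexK /=.
cases2 iA; cases2 iB; cases2 jA; cases2 jB; rewrite ?ord2_0 ?ord2_1 ?mi00 ?mi01 ?mi10 ?mi11 /=.
all: rewrite ?mulr1 ?mulr0 ?mul1r ?mul0r ?addr0 ?add0r ?subr0 ?subrr //.
all: rewrite ?addr0 //.
  by rewrite addrC subrK.
have e : X i3 i3 = X i2 i2 - (X i0 i0 - X i1 i1) by rewrite cd; ring.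
by rewrite e; ring.
Qed.

Definition mk2 (a b c d : C) : 'M[C]_2 :=
  \matrix_(i, j) if val i == 0%N then (if val j == 0%N then a else b)
                 else (if val j == 0%N then c else d).

Lemma herm_mk2 (a b d : C) : a^* = a -> d^* = d -> Defs.hermitian (mk2 a b b^* d).
Proof.
move=> ha hd; apply/matrixP => i j; rewrite !mxE.
by cases2 i; cases2 j; rewrite /= ?conjcK.
Qed.

Lemma nprop_mk2 (a b c d : C) : b != 0 -> ~ prop_to_id (mk2 a b c d).
Proof.
move=> hb [k hk]; move: hb; have := congr1 (fun M : 'M[C]_2 => M ord0 ord_max) hk.
by rewrite !mxE /= mulr0n => ->; rewrite eqxx.
Qed.

Lemma nprop_mk2' (a b c d : C) : a != d -> ~ prop_to_id (mk2 a b c d).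
Proof.
move=> had [k hk]; move: had.
have := congr1 (fun M : 'M[C]_2 => M ord0 ord0) hk; have := congr1 (fun M : 'M[C]_2 => M ord_max ord_max) hk.
by rewrite !mxE /= => -> ->; rewrite eqxx.
Qed.

Lemma adj_E4 (P Q Rr S : C) : adj (E4 P Q Rr S) = E4 P^* Q^* Rr^* S^*.
Proof.
apply/matrixP => i j; rewrite !mxE.
cases4 i; cases4 j; cbn [E4f nat_of_ord]; rewrite ?rmorphD ?rmorphB ?rmorphN ?conjc0 //.
Qed.

Lemma hC_conj : (hC R)^* = hC R.
Proof. by rewrite hCE conjc_real. Qed.

Lemma adj_V0 (t : 'I_3 -> R) : adj (V0 t) =
  hC R *: E4 (expi (thp t))^-1 (expi (thq t))^-1 (expi (thr t))^-1 (expi (ths t))^-1.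
Proof.
rewrite /V0 adj_scale adj_E4; congr (_ *: E4 _ _ _ _); first exact: hC_conj.
all: exact: conj_expi.
Qed.

Lemma X_eq (t : 'I_3 -> R) (HA HB : 'M[C]_2) :
  V0 t *m (HA *t 1%:M + 1%:M *t HB) *m adj (V0 t) =
  (hC R * hC R) *: Xp (expi (thp t)) (expi (thq t)) (expi (thr t)) (expi (ths t))
     (HA ord0 ord0) (HA ord0 ord_max) (HA ord_max ord0) (HA ord_max ord_max)
     (HB ord0 ord0) (HB ord0 ord_max) (HB ord_max ord0) (HB ord_max ord_max).
Proof.
by rewrite adj_V0 Y_expand /V0 /Xp -!scalemxAl -scalemxAr scalerA.
Qed.

Lemma herm_conjn n (P H : 'M[C]_n) : Defs.hermitian H -> Defs.hermitian (P *m H *m adj P).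
Proof. by rewrite /Defs.hermitian => hH; rewrite !adj_mul adj_adj hH mulmxA. Qed.

Lemma herm_local (A B : 'M[C]_2) : Defs.hermitian A -> Defs.hermitian B ->
  Defs.hermitian (A *t 1%:M + 1%:M *t B).
Proof. by move=> hA hB; rewrite /Defs.hermitian adj_add !adj_tens adj_one hA hB. Qed.

Lemma scale_conds (X : 'M[C]_(2 * 2)) (c : C) :
  [/\ X i0 i3 = 0, X i1 i2 = 0, X i2 i1 = 0 & X i3 i0 = 0] /\
  [/\ X i0 i1 = X i2 i3, X i0 i2 = X i1 i3, X i1 i0 = X i3 i2, X i2 i0 = X i3 i1 &
      X i0 i0 - X i1 i1 = X i2 i2 - X i3 i3] ->
  let Y := c *: X in
  [/\ Y i0 i3 = 0, Y i1 i2 = 0, Y i2 i1 = 0 & Y i3 i0 = 0] /\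
  [/\ Y i0 i1 = Y i2 i3, Y i0 i2 = Y i1 i3, Y i1 i0 = Y i3 i2, Y i2 i0 = Y i3 i1 &
      Y i0 i0 - Y i1 i1 = Y i2 i2 - Y i3 i3].
Proof.
move=> [[c03 c12 c21 c30] [c01 c02 c10 c20 cd]] Y.
rewrite /Y !mxE c03 c12 c21 c30 c01 c02 c10 c20 !mulr0; split; split => //.
by rewrite -!mulrBr cd.
Qed.

End S6.

Section S7.
Variable R : realType.
Local Notation C := R[i].


Lemma T0 (F T : C) : F * T = 0 -> F != 0 -> T = 0.
Proof. by move/eqP; rewrite mulf_eq0 => /orP [/eqP -> /eqP //|/eqP]. Qed.

Lemma zm_of (a b u : R) : a - b = 2%:R * u ->
  expi a / expi b - expi b / expi a = 0 -> zero_mod_half_pi u.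
Proof. by move=> hab /phase_fwd; rewrite hab -zmhp_sin. Qed.

Lemma prop_of (H : 'M[C]_2) : H ord0 ord_max = 0 -> H ord_max ord0 = 0 ->
  H ord0 ord0 = H ord_max ord_max -> prop_to_id H.
Proof.
move=> h01 h10 hd; exists (H ord0 ord0); apply/matrixP => i j; rewrite !mxE.
by cases2 i; cases2 j; rewrite /= ?ord2_0 ?ord2_1 ?mulr1n ?mulr0n.
Qed.

Lemma hC_neq0 : hC R * hC R != 0.
Proof. by rewrite mulf_neq0 // invr_eq0 two_neq0. Qed.

Lemma fwd (t : 'I_3 -> R) : gen_thermal (V0 t) ->
  exists j k : 'I_3, j != k /\
    (zero_mod_half_pi (t j - t k) \/ zero_mod_half_pi (t j + t k)).
Proof.
case=> HA [HA' [HB [HB' [_ _ np eq]]]].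
rewrite X_eq in eq.
case: (local_entries hC_neq0 eq) => [[e03 e12 e01] [e02 e10 e20]].
have := fwd_alg (expi_neq0 _) (expi_neq0 _) (expi_neq0 _) (expi_neq0 _) e03 e12 e01 e02 e10 e20.
move=> [[h3a h3b h1a] [h1b h2a h2b]].
have [z3a|n3a] := eqVneq (HA ord0 ord0 - HA ord_max ord_max + HB ord0 ord0 - HB ord_max ord_max) 0; last first.
  exists o1, o0; split => //; left; apply: (zm_of _ (T0 h3a n3a)).
  by rewrite /thp /thq; ring.
have [z3b|n3b] := eqVneq (HA ord0 ord0 - HA ord_max ord_max - HB ord0 ord0 + HB ord_max ord_max) 0; last first.
  exists o0, o1; split => //; right; apply: (@zm_of (thr t) (ths t)).
    by rewrite /thr /ths; ring.
  by rewrite -opprB (T0 h3b n3b) oppr0.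
have [z1a|n1a] := eqVneq (HA ord0 ord_max + HA ord_max ord0 + HB ord0 ord_max + HB ord_max ord0) 0; last first.
  exists o2, o1; split => //; left; apply: (zm_of _ (T0 h1a n1a)).
  by rewrite /thp /thr; ring.
have [z1b|n1b] := eqVneq (HA ord0 ord_max + HA ord_max ord0 - HB ord0 ord_max - HB ord_max ord0) 0; last first.
  exists o2, o1; split => //; right; apply: (zm_of _ (T0 h1b n1b)).
  by rewrite /thq /ths; ring.
have [z2a|n2a] := eqVneq (HA ord0 ord_max - HA ord_max ord0 - HB ord0 ord_max + HB ord_max ord0) 0; last first.
  exists o2, o0; split => //; right; apply: (zm_of _ (T0 h2a n2a)).
  by rewrite /thp /ths; ring.
have [z2b|n2b] := eqVneq (HA ord0 ord_max - HA ord_max ord0 + HB ord0 ord_max - HB ord_max ord0) 0; last first.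
  exists o2, o0; split => //; left; apply: (zm_of _ (T0 h2b n2b)).
  by rewrite /thq /thr; ring.
have [[a01 a10 b01 b10] [ad bd]] := six_zero z3a z3b z1a z1b z2a z2b.
by exfalso; case: np => h; apply: h; apply: prop_of.
Qed.

End S7.

Section S8.
Variable R : realType.
Local Notation C := R[i].

Lemma bwd_gen (t : 'I_3 -> R) (HA HB : 'M[C]_2) :
  Defs.hermitian HA -> Defs.hermitian HB -> ~ prop_to_id HA ->
  let p := expi (thp t) in let q := expi (thq t) in
  let r := expi (thr t) in let s := expi (ths t) in
  let a00 := HA ord0 ord0 in let a01 := HA ord0 ord_max in
  let a10 := HA ord_max ord0 in let a11 := HA ord_max ord_max in
  let b00 := HB ord0 ord0 in let b01 := HB ord0 ord_max in
  let b10 := HB ord_max ord0 in let b11 := HB ord_max ord_max in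
  (a00 - a11 + b00 - b11) * (q / p - p / q) = 0 ->
  (a00 - a11 - b00 + b11) * (s / r - r / s) = 0 ->
  (a01 + a10 + b01 + b10) * (p / r - r / p) = 0 ->
  (a01 + a10 - b01 - b10) * (q / s - s / q) = 0 ->
  (a01 - a10 - b01 + b10) * (p / s - s / p) = 0 ->
  (a01 - a10 + b01 - b10) * (q / r - r / q) = 0 ->
  gen_thermal (V0 t).
Proof.
move=> hA hB np p q r s a00 a01 a10 a11 b00 b01 b10 b11 h3a h3b h1a h1b h2a h2b.
have hX := herm_conjn (V0 t) (herm_local hA hB).
have := bwd_core (expi_neq0 _) (expi_neq0 _) (expi_neq0 _) (expi_neq0 _) h3a h3b h1a h1b h2a h2b.
move/(scale_conds (hC R * hC R)); rewrite -X_eq => cds.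
have [HA' [HB' [hA' hB' eX]]] := local_of_conditions hX cds.
by exists HA, HA', HB, HB'; split => //; left.
Qed.

Lemma herm_mk2' (a b c d : C) : a^* = a -> d^* = d -> c = b^* -> Defs.hermitian (mk2 a b c d).
Proof. by move=> ha hd ->; apply: herm_mk2. Qed.

Lemma conj_iC : (iC R)^* = - iC R.
Proof. by apply/eqP; rewrite eq_complex /= oppr0 !eqxx. Qed.

Lemma two1_neq0 : (1 : C) != -1.
Proof. by rewrite -subr_eq0 opprK -[1 + 1]/(2%:R) pnatr_eq0. Qed.


Lemma iC_neq0 : iC R != 0.
Proof. by apply/negP => /eqP; move/(congr1 (@complex.Im R)) => /= /eqP; rewrite oner_eq0. Qed.

Lemma conjN1 : (-1 : C)^* = -1.
Proof. exact: rmorphN1. Qed.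

Lemma conj_NiC : (- iC R)^* = iC R.
Proof. by rewrite /iC /conjc /= oppr0 opprK. Qed.

Ltac bwd_tac := 
  first [ by apply: herm_mk2'; rewrite ?conjc0 ?conjc1 ?conjN1 ?conj_iC ?conj_NiC
        | by apply: nprop_mk2; rewrite ?oppr_eq0 ?oner_eq0 ?iC_neq0
        | by apply: nprop_mk2'; rewrite ?two1_neq0
        | idtac ].

Lemma bwd_T1a (t : 'I_3 -> R) : expi (thr t) = expi (thp t) \/ expi (thr t) = - expi (thp t) ->
  gen_thermal (V0 t).
Proof.
case=> e; apply: (@bwd_gen t (mk2 0 1 1 0) (mk2 0 1 1 0)); bwd_tac.
all: by rewrite !mxE /= ?e ?invrN; ring.
Qed.

Lemma bwd_T1b (t : 'I_3 -> R) : expi (ths t) = expi (thq t) \/ expi (ths t) = - expi (thq t) ->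
  gen_thermal (V0 t).
Proof.
case=> e; apply: (@bwd_gen t (mk2 0 1 1 0) (mk2 0 (-1) (-1) 0)); bwd_tac.
all: by rewrite !mxE /= ?e ?invrN; ring.
Qed.

Lemma bwd_T2a (t : 'I_3 -> R) : expi (ths t) = expi (thp t) \/ expi (ths t) = - expi (thp t) ->
  gen_thermal (V0 t).
Proof.
case=> e; apply: (@bwd_gen t (mk2 0 (- iC R) (iC R) 0) (mk2 0 (iC R) (- iC R) 0)); bwd_tac.
all: by rewrite !mxE /= ?e ?invrN; ring.
Qed.

Lemma bwd_T2b (t : 'I_3 -> R) : expi (thr t) = expi (thq t) \/ expi (thr t) = - expi (thq t) ->
  gen_thermal (V0 t).
Proof.
case=> e; apply: (@bwd_gen t (mk2 0 (- iC R) (iC R) 0) (mk2 0 (- iC R) (iC R) 0)); bwd_tac.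
all: by rewrite !mxE /= ?e ?invrN; ring.
Qed.

Lemma bwd_T3a (t : 'I_3 -> R) : expi (thp t) = expi (thq t) \/ expi (thp t) = - expi (thq t) ->
  gen_thermal (V0 t).
Proof.
case=> e; apply: (@bwd_gen t (mk2 1 0 0 (-1)) (mk2 1 0 0 (-1))); bwd_tac.
all: by rewrite !mxE /= ?e ?invrN; ring.
Qed.

Lemma bwd_T3b (t : 'I_3 -> R) : expi (ths t) = expi (thr t) \/ expi (ths t) = - expi (thr t) ->
  gen_thermal (V0 t).
Proof.
case=> e; apply: (@bwd_gen t (mk2 1 0 0 (-1)) (mk2 (-1) 0 0 1)); bwd_tac.
all: by rewrite !mxE /= ?e ?invrN; ring.
Qed.

End S8.

Section S9.
Variable R : realType.
Local Notation C := R[i].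

Lemma bwd_from (a b u w : R) : a - b = 2%:R * w -> (w = u \/ w = - u) ->
  zero_mod_half_pi u -> expi b = expi a \/ expi b = - expi a.
Proof.
move=> hab hw [m hm]; apply: phase_bwd; rewrite hab; apply/zmhp_sin.
case: hw => ->; first by exists m.
by exists (- m); rewrite hm mulrNz mulNr.
Qed.

Lemma ord3_0 (p : (0 < 3)%N) : @Ordinal 3 0 p = o0. Proof. exact: val_inj. Qed.
Lemma ord3_1 (p : (1 < 3)%N) : @Ordinal 3 1 p = o1. Proof. exact: val_inj. Qed.
Lemma ord3_2 (p : (2 < 3)%N) : @Ordinal 3 2 p = o2. Proof. exact: val_inj. Qed.

Lemma bwd (t : 'I_3 -> R) : (exists j k : 'I_3, j != k /\
    (zero_mod_half_pi (t j - t k) \/ zero_mod_half_pi (t j + t k))) ->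
  gen_thermal (V0 t).
Proof.
case=> j [k [hjk hz]].
move: j k hjk hz => [[|[|[|?]]] hj] // [[|[|[|?]]] hk] //;
  rewrite ?ord3_0 ?ord3_1 ?ord3_2 // => _ [] h.
- apply: bwd_T3a; apply: (@bwd_from (thq t) (thp t) _ (t o1 - t o0) _ _ h);
    [by rewrite /thq /thp; ring | by right; ring].
- apply: bwd_T3b; apply: (@bwd_from (thr t) (ths t) _ (t o0 + t o1) _ _ h);
    [by rewrite /thr /ths; ring | by left; ring].
- apply: bwd_T2b; apply: (@bwd_from (thq t) (thr t) _ (t o2 - t o0) _ _ h);
    [by rewrite /thq /thr; ring | by right; ring].
- apply: bwd_T2a; apply: (@bwd_from (thp t) (ths t) _ (t o2 + t o0) _ _ h);
    [by rewrite /thp /ths; ring | by left; ring].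
- apply: bwd_T3a; apply: (@bwd_from (thq t) (thp t) _ (t o1 - t o0) _ _ h);
    [by rewrite /thq /thp; ring | by left; ring].
- apply: bwd_T3b; apply: (@bwd_from (thr t) (ths t) _ (t o0 + t o1) _ _ h);
    [by rewrite /thr /ths; ring | by left; ring].
- apply: bwd_T1a; apply: (@bwd_from (thp t) (thr t) _ (t o2 - t o1) _ _ h);
    [by rewrite /thp /thr; ring | by right; ring].
- apply: bwd_T1b; apply: (@bwd_from (thq t) (ths t) _ (t o2 + t o1) _ _ h);
    [by rewrite /thq /ths; ring | by left; ring].
- apply: bwd_T2b; apply: (@bwd_from (thq t) (thr t) _ (t o2 - t o0) _ _ h);
    [by rewrite /thq /thr; ring | by left; ring].
- apply: bwd_T2a; apply: (@bwd_from (thp t) (ths t) _ (t o2 + t o0) _ _ h);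
    [by rewrite /thp /ths; ring | by left; ring].
- apply: bwd_T1a; apply: (@bwd_from (thp t) (thr t) _ (t o2 - t o1) _ _ h);
    [by rewrite /thp /thr; ring | by left; ring].
- apply: bwd_T1b; apply: (@bwd_from (thq t) (ths t) _ (t o2 + t o1) _ _ h);
    [by rewrite /thq /ths; ring | by left; ring].
Qed.

End S9.

Close Scope complex_scope.
Close Scope classical_set_scope.

Theorem theorem5 (R : realType) (uA uB vA vB : 'M[R[i]]_2) (t : 'I_3 -> R) :
  unitary uA -> unitary uB -> unitary vA -> unitary vB ->
  gen_thermal (canonical_unitary uA uB vA vB t) <->
  exists j k : 'I_3, j != k /\
    (zero_mod_half_pi (t j - t k) \/ zero_mod_half_pi (t j + t k)).
Proof.
move=> ua ub uc ud; rewrite (reduce t ua ub uc ud); split; [exact: fwd | exact: bwd].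
Qed.
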